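(* Let $p,q$ be positive integers with $\frac1p+\frac1q=\frac12$. Let $M$ be a $\{p,q\}$-map of radius $0$ (i.e., all vertices of $M$ are exterior) and perimeter $n>0$. Then $\mathrm{Area}(M)\le\frac{q(n-2)}{2p}$.
   Context: A map is a finite, connected, simply connected 2-complex embedded in the plane; $\mathrm{Area}$ = number of faces; perimeter = length of the boundary path; degree of a vertex = number of oriented edges starting there, degree of a face = length of its boundary path. A $(p,q)$-map: every interior face has degree $\ge p$, every interior vertex has degree $\ge q$. A $\{p,q\}$-map is a $(p,q)$-map in which every face has degree at least $p$ and less than $2p$ and every vertex has degree less than $2q$. The radius is the maximal distance from a vertex to the boundary. *)

(* Defs.v *)
From mathcomp Require Import all_boot all_order all_fingroup all_algebra.
Set Implicit Arguments.
Unset Strict Implicit.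
Unset Printing Implicit Defensive.
Import GRing.Theory Num.Theory.

(* A combinatorial map on a finite set of darts D (oriented edges):
   - [alpha] : fixed-point-free involution (reversal of an oriented edge);
   - [sigma] : rotation of the oriented edges starting at a common vertex;
   - face permutation [phi d = sigma (alpha d)] (MathComp: (s * t) x = t (s x)),
     so that phi d is the next oriented edge of the face boundary walk;
   vertices = sigma-orbits, edges = alpha-orbits, faces = phi-orbits
   (the latter including the exterior region). *)
Definition face_perm (D : finType) (alpha sigma : {perm D}) : {perm D} :=
  (alpha * sigma)%g.

Section Maps.
Variables (D : finType) (alpha sigma : {perm D}) (d0 : D).
Local Notation phi := (face_perm alpha sigma).

Definition map_connected : Prop :=
  forall x y : D, connect (fun a b => (b == alpha a) || (b == sigma a)) x y.

(* spherical (genus 0): V - E + F = 2, F counting the exterior face *)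
Definition map_planar : Prop :=
  #|porbits sigma| + #|porbits phi| = #|porbits alpha| + 2.

(* A map (finite connected simply connected plane 2-complex) with at least
   one edge, presented as a connected genus-0 combinatorial map together
   with a dart d0 on the exterior face (boundary path). *)
Definition is_map : Prop :=
  [/\ forall d, alpha d != d, forall d, alpha (alpha d) = d,
      map_connected & map_planar].

Definition outer : {set D} := porbit phi d0.

Definition perimeter : nat := #|outer|.

(* number of (interior) faces = 2-cells *)
Definition area : nat := #|porbits phi| - 1.

Definition vdeg (d : D) : nat := #|porbit sigma d|.
Definition fdeg (d : D) : nat := #|porbit phi d|.

Definition boundary_vertex (d : D) : bool :=
  [exists e in porbit sigma d, e \in outer].

Definition interior_face (d : D) : bool := d \notin outer.

Definition pq_map (p q : nat) : Prop :=
  (forall d, interior_face d -> p <= fdeg d) /\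
  (forall d, ~~ boundary_vertex d -> q <= vdeg d).

Definition braces_pq_map (p q : nat) : Prop :=
  [/\ pq_map p q,
      forall d, interior_face d -> p <= fdeg d < 2 * p
    & forall d, vdeg d < 2 * q].

Definition radius0 : Prop := forall d, boundary_vertex d.

End Maps.

(* Main.v *)
Require Import Defs.
From mathcomp Require Import all_boot all_order all_fingroup all_algebra.
From mathcomp Require Import zify.
Set Implicit Arguments. Unset Strict Implicit. Unset Printing Implicit Defensive.

Lemma porbits_partition (T : finType) (s : {perm T}) :
  partition (porbits s) [set: T].
Proof.
apply/and3P; split.
- apply/eqP/setP => x; rewrite inE; apply/bigcupP; exists (porbit s x).
    by apply: imset_f. by apply: porbit_id.
- apply/trivIsetP => A B /imsetP[a _ ->] /imsetP[b _ ->] neq.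
  apply/pred0P => z /=; apply/negbTE/negP => /andP[za zb].
  have e1 : porbit s z = porbit s a by apply/eqP; rewrite eq_porbit_mem.
  have e2 : porbit s z = porbit s b by apply/eqP; rewrite eq_porbit_mem.
  by move: neq; rewrite -e1 -e2 eqxx.
- apply/imsetP => -[x _ /setP /(_ x)]; by rewrite inE porbit_id.
Qed.

Lemma sum_porbits (T : finType) (s : {perm T}) :
  \sum_(B in porbits s) #|B| = #|T|.
Proof. by rewrite -(card_partition (porbits_partition s)) cardsT. Qed.

Lemma porbit_inv (T : finType) (a : {perm T}) d :
  (forall d, a (a d) = d) -> a d != d -> #|porbit a d| = 2.
Proof.
move=> inv ne.
have -> : porbit a d = [set d; a d].
  apply/setP => y; rewrite !inE; apply/idP/idP.
  - case/porbitP => i ->; rewrite permX; elim: i => [|i IH] /=; first by rewrite eqxx.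
    by case/orP: IH => /eqP ->; rewrite ?inv eqxx ?orbT.
  - case/orP => /eqP ->; first exact: porbit_id.
    by have := mem_porbit a 1 d; rewrite expg1.
by rewrite cards2 eq_sym ne.
Qed.
From mathcomp Require Import ring lra.
Import GRing.Theory Num.Theory.

Theorem lemma2p11 (p q : nat) (D : finType) (alpha sigma : {perm D}) (d0 : D) :
  0 < p -> 0 < q ->
  ((1 / p%:Q) + (1 / q%:Q) = 1 / 2)%R ->
  is_map alpha sigma ->
  braces_pq_map alpha sigma d0 p q ->
  radius0 alpha sigma d0 ->
  0 < perimeter alpha sigma d0 ->
  ((area alpha sigma)%:Q <=
     q%:Q * ((perimeter alpha sigma d0)%:Q - 2) / (2 * p%:Q))%R.
Proof.
move=> p0 q0 H; rewrite -!pmulrn in H *.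
move: H; move=> H [afix ainv _ planar] [_ fdegH _] rad n0.
set phi := face_perm alpha sigma in planar fdegH *.
rewrite /area /perimeter -/phi.
set n := #|outer alpha sigma d0|.
have pq : p * q = 2 * p + 2 * q.
  have hp : (p%:R != 0 :> rat)%R by rewrite pnatr_eq0 -lt0n.
  have hq : (q%:R != 0 :> rat)%R by rewrite pnatr_eq0 -lt0n.
  have e1 : ((2 * q + 2 * p)%:R = 2 * p%:R * q%:R * (1 / p%:R + 1 / q%:R) :> rat)%R.
    rewrite natrD !natrM; field; by rewrite hp hq.
  rewrite H in e1.
  have e2 : ((2 * q + 2 * p)%:R = (p * q)%:R :> rat)%R by rewrite e1 natrM; field.
  by move/eqP: e2; rewrite eqr_nat addnC => /eqP.
have E2 : #|D| = 2 * #|porbits alpha|.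
  rewrite -(sum_porbits alpha) mulnC -sum_nat_const.
  by apply: eq_bigr => B /imsetP[x _ ->]; apply: porbit_inv.
have outP : outer alpha sigma d0 \in porbits phi by apply: imset_f.
have Fbound : n + p * (#|porbits phi| - 1) <= #|D|.
  rewrite -(sum_porbits phi) (big_setD1 _ outP) /= leq_add2l.
  rewrite (cardsD1 (outer alpha sigma d0) (porbits phi)) outP addKn mulnC -sum_nat_const.
  apply: leq_sum => B; rewrite !inE => /andP[neq /imsetP[x _ eB]].
  rewrite eB; apply: (proj1 (andP (fdegH x _))).
  rewrite /interior_face; apply/negP => xo; move: neq; rewrite eB.
  have -> : porbit phi x = outer alpha sigma d0 by apply/eqP; rewrite eq_porbit_mem.
  by rewrite eqxx.
have Vbound : #|porbits sigma| <= n.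
  apply: leq_trans (leq_imset_card (porbit sigma) (outer alpha sigma d0)).
  apply: subset_leq_card; apply/subsetP => B /imsetP[x _ ->].
  have /existsP[e /andP[ex eo]] := rad x.
  apply/imsetP; exists e => //; apply/eqP; rewrite eq_sym eq_porbit_mem //.
have F1 : 0 < #|porbits phi| by apply/card_gt0P; exists (outer alpha sigma d0).
set A := #|porbits phi| - 1.
have lin : p * A + 2 <= n + 2 * A by move: planar; rewrite /map_planar /A -/phi; lia.
have key : 2 * p * A + 2 * q <= q * n.
  have := leq_mul (leqnn q) lin. nia.
have hk : ((2 * p * A + 2 * q)%:R <= (q * n)%:R :> rat)%R by rewrite ler_nat.
rewrite !natrD !natrM in hk.
have pp : (0 < 2 * p%:Q :> rat)%R by rewrite mulr_gt0 // ltr0n.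
rewrite ler_pdivlMr //.
lra.
Qed.
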